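(* Let $n \ge 2$ and $1 \le r < n$ be integers, let $S^0 \in \mathbb{R}^{n\times n}$ be a symmetric matrix, and define $f:\mathbb{R}^{n\times r}\to\mathbb{R}$ by $f(V) = \|VV^\top - S^0\|_F^2$. Suppose $\hat V \in \mathbb{R}^{n\times r}$ is a local minimizer of $f$ such that the matrix $\hat S = \hat V\hat V^\top$ satisfies $\operatorname{rank}(\hat S) < r$. Then $\hat V$ is a global minimizer of $f$ over $\mathbb{R}^{n\times r}$, and $\hat S$ is a global minimizer of the problem $\min_{S} \|S - S^0\|_F^2$ subject to $S \succeq 0$ (and hence also of this problem with the additional constraint $\operatorname{rank}(S)\le r$).
   Context: $\|\cdot\|_F$ denotes the Frobenius norm; $S\succeq 0$ means $S$ is symmetric positive semidefinite. *)

(* Defs.v *)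
From mathcomp Require Import all_boot all_order all_algebra.
From mathcomp Require Import reals.
Set Implicit Arguments. Unset Strict Implicit. Unset Printing Implicit Defensive.
Import Order.TTheory GRing.Theory Num.Theory.
Local Open Scope ring_scope.

Definition frob (R : realType) (m n : nat) (A : 'M[R]_(m, n)) : R :=
  Num.sqrt (\sum_(i < m) \sum_(j < n) A i j ^+ 2).

Definition fobj (R : realType) (n r : nat) (S0 : 'M[R]_n) (V : 'M[R]_(n, r)) : R :=
  frob (V *m V^T - S0) ^+ 2.

Definition psd (R : realType) (n : nat) (S : 'M[R]_n) : Prop :=
  S^T = S /\ forall x : 'cV[R]_n, 0 <= (x^T *m S *m x) 0 0.

Definition local_min (R : realType) (m n : nat) (g : 'M[R]_(m, n) -> R)
  (X : 'M[R]_(m, n)) : Prop :=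
  exists eps : R, 0 < eps /\
    forall Y : 'M[R]_(m, n), frob (Y - X) < eps -> g X <= g Y.

(* Main.v *)
Require Import Defs.
From mathcomp Require Import all_boot all_order all_algebra.
From mathcomp Require Import reals ring lra zify.
Set Implicit Arguments. Unset Strict Implicit. Unset Printing Implicit Defensive.
Import Order.TTheory GRing.Theory Num.Theory.
Local Open Scope ring_scope.

Section Dot.
Variable R : realType.

Definition dot (m n : nat) (A B : 'M[R]_(m, n)) : R := \tr (A^T *m B).

Lemma dot_sum m n (A B : 'M[R]_(m, n)) :
  dot A B = \sum_(i < m) \sum_(j < n) A i j * B i j.
Proof.
rewrite /dot /mxtrace exchange_big /=; apply: eq_bigr => j _.
by rewrite mxE; apply: eq_bigr => i _; rewrite mxE.
Qed.

Lemma dotC m n (A B : 'M[R]_(m, n)) : dot A B = dot B A.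
Proof. by rewrite !dot_sum; do 2!(apply: eq_bigr => ? _); rewrite mulrC. Qed.

Lemma dotDl m n (A B C : 'M[R]_(m, n)) : dot (A + B) C = dot A C + dot B C.
Proof. by rewrite /dot raddfD /= mulmxDl mxtraceD. Qed.

Lemma dotDr m n (A B C : 'M[R]_(m, n)) : dot C (A + B) = dot C A + dot C B.
Proof. by rewrite dotC dotDl !(dotC C). Qed.

Lemma dotZl m n (a : R) (A B : 'M[R]_(m, n)) : dot (a *: A) B = a * dot A B.
Proof. by rewrite /dot linearZ /= -scalemxAl mxtraceZ. Qed.

Lemma dotZr m n (a : R) (A B : 'M[R]_(m, n)) : dot B (a *: A) = a * dot B A.
Proof. by rewrite dotC dotZl dotC. Qed.

Lemma dotNl m n (A B : 'M[R]_(m, n)) : dot (- A) B = - dot A B.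
Proof. by rewrite -scaleN1r dotZl mulN1r. Qed.

Lemma dot0l m n (B : 'M[R]_(m, n)) : dot 0 B = 0.
Proof. by rewrite /dot linear0 mul0mx /mxtrace big1 // => i _; rewrite mxE. Qed.

Lemma dot0r m n (B : 'M[R]_(m, n)) : dot B 0 = 0.
Proof. by rewrite dotC dot0l. Qed.

Lemma dot_tr m n (A B : 'M[R]_(m, n)) : dot A^T B^T = dot A B.
Proof.
by rewrite /dot trmxK mxtrace_mulC -mxtrace_tr trmx_mul trmxK.
Qed.

Lemma dotAA_ge0 m n (A : 'M[R]_(m, n)) : 0 <= dot A A.
Proof. by rewrite dot_sum; do 2!(apply: sumr_ge0 => ? _); rewrite -expr2 sqr_ge0. Qed.

Lemma dotAA_eq0 m n (A : 'M[R]_(m, n)) : dot A A = 0 -> A = 0.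
Proof.
rewrite dot_sum => /eqP; rewrite psumr_eq0; last first.
  by move=> i _; apply: sumr_ge0 => ? _; rewrite -expr2 sqr_ge0.
move=> /allP H; apply/matrixP => i j; rewrite mxE.
have /implyP/(_ isT) := H i (mem_index_enum _).
rewrite psumr_eq0; last by move=> ? _; rewrite -expr2 sqr_ge0.
move=> /allP/(_ j (mem_index_enum _))/implyP/(_ isT).
by rewrite mulf_eq0 orbb => /eqP.
Qed.

Lemma frob2 m n (A : 'M[R]_(m, n)) : frob A ^+ 2 = dot A A.
Proof.
rewrite /frob sqr_sqrtr; last by do 2!(apply: sumr_ge0 => ? _); rewrite sqr_ge0.
by rewrite dot_sum; do 2!(apply: eq_bigr => ? _); rewrite expr2.
Qed.

Lemma frobZ m n (t : R) (A : 'M[R]_(m, n)) : frob (t *: A) = `|t| * frob A.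
Proof.
rewrite /frob -sqrtr_sqr -sqrtrM ?sqr_ge0 // mulr_sumr; congr Num.sqrt.
apply: eq_bigr => i _; rewrite mulr_sumr; apply: eq_bigr => j _.
by rewrite mxE exprMn.
Qed.

Lemma small_t (A B C D delta : R) : 0 < delta ->
  (forall t, 0 < t -> t < delta -> 0 <= A + t * (B + t * (C + t * D))) -> 0 <= A.
Proof.
move=> d0 H; rewrite leNgt; apply/negP => A0.
set K := `|B| + `|C| + `|D| + 1.
have K0 : 0 < K by rewrite /K; have := normr_ge0 B; have := normr_ge0 C; have := normr_ge0 D; lra.
set t := Num.min (delta / 2) (Num.min 1 (- A / (2 * K))).
have t0 : 0 < t.
  rewrite /t !lt_min; apply/and3P; split => //; first lra.
  by apply: divr_gt0; lra.
have t1 : t <= 1 by rewrite /t !ge_min lexx orbT.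
have td2 : t <= delta / 2 by rewrite /t ge_min lexx.
have td : t < delta by lra.
have tK : t * K <= - A / 2.
  have : t <= - A / (2 * K) by rewrite /t !ge_min lexx !orbT.
  rewrite ler_pdivlMr; last lra.
  lra.
have HB : B <= `|B| := ler_norm B.
have HC : t * C <= t * `|C| by rewrite ler_pM2l // ler_norm.
have HD : t * (t * D) <= t * (t * `|D|) by rewrite ler_pM2l // ler_pM2l // ler_norm.
have HC' : t * `|C| <= `|C| by rewrite ler_piMl.
have HD1 : t * `|D| <= `|D| by rewrite ler_piMl.
have HD' : t * (t * `|D|) <= `|D|.
  apply: le_trans HD1; apply: ler_piMl => //; apply: mulr_ge0 => //; lra.
have := H t t0 td.
have -> : A + t * (B + t * (C + t * D)) = A + t * (B + (t * C + t * (t * D))) by ring.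
have : t * (B + (t * C + t * (t * D))) <= t * K.
  rewrite ler_pM2l // /K; lra.
lra.
Qed.

Lemma lm_dir m n (g : 'M[R]_(m,n) -> R) X : local_min g X ->
  forall D, exists2 delta, 0 < delta &
    forall t, 0 < t -> t < delta -> g X <= g (X + t *: D).
Proof.
case=> eps [e0 H] D.
have f0 : 0 <= frob D by rewrite /frob sqrtr_ge0.
exists (eps / (frob D + 1)); first by apply: divr_gt0 => //; lra.
move=> t t0 td; apply: H.
rewrite addrAC subrr add0r frobZ gtr0_norm //.
move: td; rewrite ltr_pdivlMr; last lra.
move=> h; apply: le_lt_trans h.
rewrite ler_pM2l //; lra.
Qed.

Lemma expand n r (S0 : 'M[R]_n) (V W : 'M[R]_(n, r)) (t : R) :
  let E := V *m V^T - S0 in let M := V *m W^T + W *m V^T in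
  let N := W *m W^T in
  fobj S0 (V + t *: W) = dot E E + t * (2 * dot E M + t * (dot M M + 2 * dot E N + t * (2 * dot M N + t * dot N N))).
Proof.
move=> E M N.
rewrite /fobj.
have -> : (V + t *: W) *m (V + t *: W)^T - S0 = E + t *: M + (t ^+ 2) *: N.
  rewrite /E /M /N raddfD /= linearZ /= mulmxDl !mulmxDr -!scalemxAl -!scalemxAr.
  rewrite scalerA -expr2 scalerDr.
  by rewrite !addrA !(addrAC _ _ (- S0)).
clearbody E M N.
rewrite (frob2 (E + t *: M + t ^+ 2 *: N)) !(dotDl, dotDr, dotZl, dotZr).
rewrite (dotC M E) (dotC N E) (dotC N M).
ring.
Qed.


Definition bf n (S : 'M[R]_n) (x y : 'cV[R]_n) : R := (x^T *m S *m y) 0 0.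

Lemma bf_sym n (S : 'M[R]_n) x y : S^T = S -> bf S y x = bf S x y.
Proof.
move=> hS; rewrite /bf -[in RHS](trmxK (x^T *m S *m y)) [RHS]mxE.
by rewrite !trmx_mul !trmxK hS mulmxA.
Qed.

Lemma bf_add n (S : 'M[R]_n) x y (t : R) :
  bf S (x + t *: y) (x + t *: y) =
  bf S x x + t * (bf S x y + bf S y x) + t ^+ 2 * bf S y y.
Proof.
have tD : (x + t *: y)^T = x^T + t *: y^T by rewrite raddfD /= linearZ.
rewrite /bf tD !mulmxDr !mulmxDl -!scalemxAr -!scalemxAl !mxE.
ring.
Qed.

Lemma bf_delta n (S : 'M[R]_n) i j : bf S (delta_mx i 0) (delta_mx j 0) = S i j.
Proof. by rewrite /bf trmx_delta -rowE -colE !mxE. Qed.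

Lemma entryB m n (A B : 'M[R]_(m,n)) i j : (A - B) i j = A i j - B i j.
Proof. by rewrite !mxE. Qed.
Lemma entryZ m n (a : R) (A : 'M[R]_(m,n)) i j : (a *: A) i j = a * A i j.
Proof. by rewrite !mxE. Qed.
Lemma entryT m n (A : 'M[R]_(m,n)) i j : A^T i j = A j i.
Proof. by rewrite !mxE. Qed.
Lemma entry11 (A B : 'M[R]_1) : (A *m B) 0 0 = A 0 0 * B 0 0.
Proof. by rewrite !mxE big_ord1. Qed.

Lemma tr11 (A : 'M[R]_1) : \tr A = A 0 0.
Proof. by rewrite /mxtrace big_ord1. Qed.

Lemma dot_rank1 n (x : 'cV[R]_n) (E : 'M[R]_n) : dot (x *m x^T) E = bf E x x.
Proof.
by rewrite /dot trmx_mul trmxK -mulmxA mxtrace_mulC tr11.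
Qed.

Lemma lin0 (a b : R) : (forall t, 0 <= a + t * b) -> b = 0.
Proof.
move=> H; apply/eqP; apply/negPn/negP => hb.
have := H (- (a + 1) / b).
have -> : a + - (a + 1) / b * b = -1 by field.
lra.
Qed.

Lemma psd_diag0 n (S : 'M[R]_n) i j : psd S -> S i i = 0 -> S i j = 0.
Proof.
case=> hS hq hi.
have H t : 0 <= S j j + t * (2 * S i j).
  have := hq (delta_mx j 0 + t *: delta_mx i 0).
  rewrite -/(bf S _ _) bf_add !bf_delta hi -(bf_delta S j i) bf_sym // bf_delta.
  by rewrite mulr0 addr0 (_ : t * (2 * S i j) = t * (S i j + S i j)) //; ring.
have := lin0 H => /eqP; rewrite mulf_eq0 pnatr_eq0 /= => /eqP.
done.
Qed.

Lemma psd_diag_ge0 n (S : 'M[R]_n) i : psd S -> 0 <= S i i.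
Proof. by case=> _ hq; rewrite -bf_delta; apply: hq. Qed.

Lemma psd_dot n (S E : 'M[R]_n) : psd S -> psd E -> 0 <= dot S E.
Proof.
move=> PS PE.
have [k] := ubnP #|[set j | S j j != 0]|; elim: k S PS => // k IH S PS Hk.
case: (pickP (fun j => S j j != 0)) => [i Hi | H0]; last first.
  have -> : S = 0.
    apply/matrixP => a b; rewrite mxE; apply: psd_diag0 PS _.
    by have := H0 a => /= /negbFE/eqP.
  by rewrite dot0l.
have Sii : 0 < S i i by rewrite lt_def Hi psd_diag_ge0.
set s := col i S.
set S' := S - (S i i)^-1 *: (s *m s^T).
have hS : S^T = S by case: PS.
have PS' : psd S'.
  split.
    by rewrite /S' raddfB /= linearZ /= trmx_mul trmxK hS.
  move=> x.
  have e1 : (x^T *m S' *m x) 0 0 = bf S x x - (S i i)^-1 * (bf S x (delta_mx i 0)) ^+ 2.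
    rewrite /S' mulmxBr mulmxBl entryB -/(bf S x x); congr (_ - _).
    rewrite -scalemxAr -scalemxAl entryZ; congr (_ * _).
    rewrite /bf -colE -/s !mulmxA -(mulmxA (x^T *m s)) entry11.
    rewrite expr2 colE -mulmxA -colE; congr (_ * _).
    by rewrite -[in LHS](trmxK (s^T *m x)) entryT trmx_mul trmxK.
  rewrite e1.
  set a := bf S x (delta_mx i 0).
  have := proj2 PS (x + (- a / S i i) *: delta_mx i 0).
  rewrite -/(bf S _ _) bf_add (@bf_sym _ S x (delta_mx i 0) hS) -/a bf_delta.
  have -> : bf S x x + - a / S i i * (a + a) + (- a / S i i) ^+ 2 * S i i
     = bf S x x - (S i i)^-1 * a ^+ 2 by field; rewrite lt0r_neq0.
  done.
have -> : dot S E = dot S' E + (S i i)^-1 * dot (s *m s^T) E.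
  by rewrite /S' dotDl dotNl dotZl; ring.
apply: addr_ge0.
  apply: IH PS' _.
  rewrite -ltnS; apply: (leq_trans _ Hk); rewrite ltnS.
  rewrite (cardsD1 i [set j | S j j != 0]) (_ : i \in _ = true) ?inE // add1n ltnS; apply: subset_leq_card.
  apply/subsetP => j; rewrite !inE.
  rewrite /S' !mxE big_ord1 !mxE.
  case: (eqVneq j i) => [->|ji /=]; first by rewrite mulrA mulVf ?mul1r ?subrr ?eqxx // lt0r_neq0.
  apply: contraNN => /eqP Sjj.
  have Sji : S j i = 0 by apply: psd_diag0.
  by rewrite Sjj Sji mul0r mulr0 subrr.
apply: mulr_ge0; first by rewrite invr_ge0 ltW.
rewrite dot_rank1; exact: (proj2 PE).
Qed.


Lemma dot_sq m n (D F : 'M[R]_(m, n)) : dot (D + F) (D + F) = dot D D + 2 * dot D F + dot F F.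
Proof. by rewrite dotDl !dotDr (dotC F D); ring. Qed.

Lemma AAt0 p q (A : 'M[R]_(p, q)) : A *m A^T = 0 -> A = 0.
Proof.
move=> h; have : dot A^T A^T = 0 by rewrite /dot trmxK h mxtrace0.
by move/dotAA_eq0 => /(congr1 trmx); rewrite trmxK linear0.
Qed.

Lemma ker_vec n r (V : 'M[R]_(n, r)) : (\rank (V *m V^T) < r)%N ->
  exists2 u : 'cV[R]_r, u != 0 & V *m u = 0.
Proof.
move=> hr.
set K := kermx (V *m V^T).
have sK : (K <= kermx V)%MS.
  rewrite sub_kermx; apply/eqP; apply: AAt0.
  by rewrite trmx_mul !mulmxA -(mulmxA K) mulmx_ker mul0mx.
have := mxrankS sK; rewrite !mxrank_ker.
have := rank_leq_row (V *m V^T); have := rank_leq_row V.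
move=> h1 h2 h3.
have hV : (\rank V^T < r)%N.
  rewrite mxrank_tr; apply: leq_ltn_trans hr; lia.
set K2 := kermx V^T.
have K2n0 : K2 != 0.
  by rewrite -mxrank_eq0 mxrank_ker; lia.
case/boolP: [exists i, row i K2 != 0] => [/existsP[i Hi] | /existsPn H].
  exists (row i K2)^T.
    by apply: contra Hi => /eqP h; rewrite -[row i K2]trmxK h linear0.
  by rewrite -[V]trmxK -trmx_mul -row_mul mulmx_ker row0 linear0.
case/negP: K2n0; apply/eqP/row_matrixP => i; rewrite row0.
by have /negbNE/eqP := H i.
Qed.

Lemma psd_VVt n r (V : 'M[R]_(n, r)) : psd (V *m V^T).
Proof.
split; first by rewrite trmx_mul trmxK.
move=> x; have := dotAA_ge0 (V^T *m x).
by rewrite /dot tr11 trmx_mul trmxK !mulmxA.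
Qed.

Lemma dotWW n r (W : 'M[R]_(n, r)) (E : 'M[R]_n) : dot (W *m W^T) E = \tr (W^T *m E *m W).
Proof. by rewrite /dot trmx_mul trmxK [RHS]mxtrace_mulC mulmxA. Qed.

End Dot.

Theorem theorem1 (R : realType) (n r : nat) (hn : (2 <= n)%N)
  (hr1 : (1 <= r)%N) (hrn : (r < n)%N)
  (S0 : 'M[R]_n) (hS0 : S0^T = S0) (Vh : 'M[R]_(n, r))
  (hloc : local_min (fobj S0) Vh)
  (hrank : (\rank (Vh *m Vh^T) < r)%N) :
  (forall V : 'M[R]_(n, r), fobj S0 Vh <= fobj S0 V) /\
  psd (Vh *m Vh^T) /\
  (forall S : 'M[R]_n, psd S ->
     frob (Vh *m Vh^T - S0) ^+ 2 <= frob (S - S0) ^+ 2) /\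
  (forall S : 'M[R]_n, psd S -> (\rank S <= r)%N ->
     frob (Vh *m Vh^T - S0) ^+ 2 <= frob (S - S0) ^+ 2).
Proof.
set E := Vh *m Vh^T - S0.
have hE : E^T = E by rewrite /E raddfB /= trmx_mul trmxK hS0.
have base : fobj S0 Vh = dot E E by rewrite /fobj frob2.
have PE : psd E.
  split => // x.
  have [u un0 Vu] := ker_vec hrank.
  set W := x *m u^T.
  have [delta d0 Hd] := lm_dir hloc W.
  have hM : Vh *m W^T + W *m Vh^T = 0.
    rewrite /W trmx_mul trmxK mulmxA Vu mul0mx add0r -mulmxA -trmx_mul Vu.
    by rewrite linear0 mulmx0.
  set c := dot u u.
  have c0 : 0 < c by rewrite lt_def dotAA_ge0 andbT; apply: contra un0 => /eqP/dotAA_eq0 ->.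
  have hN : dot E (W *m W^T) = c * bf E x x.
    rewrite dotC dotWW /W trmx_mul trmxK -!mulmxA mxtrace_mulC mulmxA.
    rewrite tr11 mulmxA -(mulmxA _ u^T u) entry11 mulrC /bf; congr (_ * _).
    by rewrite /c /dot tr11.
  have H t : 0 < t -> t < delta -> 0 <= 2 * c * bf E x x + t * (0 + t * (dot (W *m W^T) (W *m W^T) + t * 0)).
    move=> t0 td; have := Hd t t0 td.
    rewrite expand -/E hM base !dot0l !dot0r hN => h.
    have h' : 0 <= t * (t * (2 * c * bf E x x + t * (0 + t * (dot (W *m W^T) (W *m W^T) + t * 0)))).
      move: h; set z := dot (W *m W^T) (W *m W^T).
      rewrite -subr_ge0; set w := _ - _; suff -> : w = t * (t * (2 * c * bf E x x + t * (0 + t * (z + t * 0)))) by [].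
      by rewrite /w; ring.
    by rewrite !pmulr_rge0 // in h'.
  have := small_t d0 H.
  rewrite -mulrA pmulr_rge0 // pmulr_rge0 //.
have EV : E *m Vh = 0.
  set W := - (E *m Vh).
  have [delta d0 Hd] := lm_dir hloc W.
  set M := Vh *m W^T + W *m Vh^T; set N := W *m W^T.
  have H t : 0 < t -> t < delta -> 0 <= 2 * dot E M + t * ((dot M M + 2 * dot E N) + t * (2 * dot M N + t * dot N N)).
    move=> t0 td; have := Hd t t0 td.
    rewrite expand -/E -/M -/N base => h.
    have h' : 0 <= t * (2 * dot E M + t * ((dot M M + 2 * dot E N) + t * (2 * dot M N + t * dot N N))).
      by move: h; rewrite -subr_ge0 addrC addKr.
    by rewrite pmulr_rge0 // in h'.
  have := small_t d0 H.
  have -> : dot E M = - 2 * dot (E *m Vh) (E *m Vh).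
    rewrite /M dotDr -[dot E (Vh *m W^T)]dot_tr trmx_mul trmxK hE.
    rewrite /dot hE mulmxA mxtrace_mulC.
    rewrite -mulmxA mxtrace_mulC /W mulmxN linearN /= trmx_mul hE !mulmxA; ring.
  move=> h; apply: dotAA_eq0; apply/eqP; rewrite eq_le dotAA_ge0 andbT.
  have := dotAA_ge0 (E *m Vh); lra.
have key S : psd S -> frob (Vh *m Vh^T - S0) ^+ 2 <= frob (S - S0) ^+ 2.
  move=> PS; rewrite !frob2 -/E.
  have -> : S - S0 = (S - Vh *m Vh^T) + E by rewrite /E addrA subrK.
  rewrite dot_sq (dotDl S (- (Vh *m Vh^T)) E) dotNl.
  have -> : dot (Vh *m Vh^T) E = 0.
    by rewrite dotWW -mulmxA EV mulmx0 mxtrace0.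
  have := psd_dot PS PE; have := dotAA_ge0 (S - Vh *m Vh^T); lra.
split.
  move=> V; rewrite /fobj; exact: key (psd_VVt V).
split; first exact: psd_VVt.
split; first exact: key.
by move=> S PS _; exact: key.
Qed.
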